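(* For every $i\in\{1,2,3\}$ we have $e_i\bar\Lambda e_i=e_iZ(\bar\Lambda)e_i$.
   Context: Let $k$ be an algebraically closed field of characteristic $2$, let $n\geq 3$ and $c=2^{n-2}$. Let $Q$ be the quiver with vertices $1,2,3$ and arrows $\beta:1\to 2$, $\gamma:2\to 1$, $\delta:2\to 3$, $\eta:3\to 2$, $\kappa:1\to 3$, $\lambda:3\to 1$. Paths are written left to right: $xy$ means first $x$, then $y$; $e_i$ denotes (the image in $\bar\Lambda$ of) the trivial path at vertex $i$. Let $I\subseteq kQ$ be the ideal generated by $\beta\delta-\kappa\lambda\kappa$, $\eta\gamma-\lambda\kappa\lambda$, $\delta\lambda-\gamma\beta\gamma$, $\kappa\eta-\beta\gamma\beta$, $\lambda\beta-(\eta\delta)^{c-1}\eta$, $\gamma\kappa-(\delta\eta)^{c-1}\delta$, $\gamma\beta\delta$, $\delta\eta\gamma$, $\lambda\kappa\eta$. Put $\bar\Lambda=kQ/I$ (Erdmann's algebra $Q(3\mathcal{K})^c$). *)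

(* Defs.v *)
(* Erdmann's algebra Q(3K)^c = kQ/I, encoded via formal
   linear combinations of paths in the path algebra kQ, with the quotient
   handled by the (Prop-valued) ideal-membership predicate. *)
From HB Require Import structures.
From mathcomp Require Import all_boot all_order all_algebra.
Set Implicit Arguments. Unset Strict Implicit. Unset Printing Implicit Defensive.
Import GRing.Theory.
Local Open Scope ring_scope.

(* Vertices 1,2,3 of the paper are the ordinals 0,1,2 of 'I_3. *)
Definition vertex := 'I_3.
Definition v1 : vertex := @Ordinal 3 0 isT.
Definition v2 : vertex := @Ordinal 3 1 isT.
Definition v3 : vertex := @Ordinal 3 2 isT.

Definition arrow := 'I_6.
Definition a_beta   : arrow := @Ordinal 6 0 isT.
Definition a_gamma  : arrow := @Ordinal 6 1 isT.
Definition a_delta  : arrow := @Ordinal 6 2 isT.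
Definition a_eta    : arrow := @Ordinal 6 3 isT.
Definition a_kappa  : arrow := @Ordinal 6 4 isT.
Definition a_lambda : arrow := @Ordinal 6 5 isT.

(* beta:1->2, gamma:2->1, delta:2->3, eta:3->2, kappa:1->3, lambda:3->1 *)
Definition src (a : arrow) : vertex :=
  nth v1 [:: v1; v2; v2; v3; v1; v3] a.
Definition tgt (a : arrow) : vertex :=
  nth v1 [:: v2; v1; v3; v2; v3; v1] a.

(* A path: start vertex and the word of arrows, read left to right
   (xy = first x then y). (i, [::]) is the trivial path e_i. *)
Definition path := (vertex * seq arrow)%type.

Fixpoint composable (v : vertex) (w : seq arrow) : bool :=
  if w is a :: w' then (src a == v) && composable (tgt a) w' else true.
Definition valid (p : path) : bool := composable p.1 p.2.
Definition pend (p : path) : vertex := last p.1 [seq tgt a | a <- p.2].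

Section PathAlgebra.
Variable k : fieldType.

Definition kQ := seq (k * path)%type.

(* Coefficient of the (valid) path p; invalid "paths" count as zero. *)
Definition coef (x : kQ) (p : path) : k :=
  \sum_(t <- x | valid t.2 && (t.2 == p)) t.1.

Definition eqkQ (x y : kQ) : Prop := forall p : path, coef x p = coef y p.

Definition addQ (x y : kQ) : kQ := x ++ y.
Definition scaleQ (c : k) (x : kQ) : kQ := [seq (c * t.1, t.2) | t <- x].
Definition subQ (x y : kQ) : kQ := addQ x (scaleQ (-1) y).
Definition mulQ (x y : kQ) : kQ :=
  flatten [seq [seq (t.1 * u.1, (t.2.1, t.2.2 ++ u.2.2))
               | u <- y & valid t.2 && valid u.2 && (pend t.2 == u.2.1)]
          | t <- x].

Definition pth (p : path) : kQ := [:: (1, p)].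
Definition idem (i : vertex) : kQ := pth (i, [::]).
Definition arr (a : arrow) : kQ := pth (src a, [:: a]).

Definition b := arr a_beta.
Definition g := arr a_gamma.
Definition d := arr a_delta.
Definition h := arr a_eta.
Definition kp := arr a_kappa.
Definition l := arr a_lambda.

Definition mul3 x y z := mulQ (mulQ x y) z.

Definition powz (x y : kQ) (m : nat) (z : kQ) : kQ :=
  iter m (fun w => mulQ (mulQ x y) w) z.

Definition cpar (n : nat) : nat := 2 ^ (n - 2).

Definition gens (n : nat) : seq kQ :=
  [:: subQ (mulQ b d) (mul3 kp l kp);
      subQ (mulQ h g) (mul3 l kp l);
      subQ (mulQ d l) (mul3 g b g);
      subQ (mulQ kp h) (mul3 b g b);
      subQ (mulQ l b) (powz h d (cpar n).-1 h);
      subQ (mulQ g kp) (powz d h (cpar n).-1 d);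
      mul3 g b d;
      mul3 d h g;
      mul3 l kp h ].

Definition gen (n : nat) (j : 'I_9) : kQ := nth [::] (gens n) j.

Definition inI (n : nat) (x : kQ) : Prop :=
  exists s : seq (k * path * 'I_9 * path)%type,
    eqkQ x (flatten [seq scaleQ t.1.1.1
                       (mul3 (pth t.1.1.2) (gen n t.1.2) (pth t.2)) | t <- s]).

Definition centralI (n : nat) (z : kQ) : Prop :=
  forall y : kQ, inI n (subQ (mulQ z y) (mulQ y z)).

End PathAlgebra.

(* Main.v *)
Require Import Defs.
From HB Require Import structures.
From mathcomp Require Import all_boot all_order all_algebra.
From mathcomp Require Import ring.
Set Implicit Arguments. Unset Strict Implicit. Unset Printing Implicit Defensive.
Import GRing.Theory.
Local Open Scope ring_scope.

Notation aB := a_beta. Notation aG := a_gamma. Notation aD := a_delta.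
Notation aH := a_eta. Notation aK := a_kappa. Notation aL := a_lambda.

Definition compat (p q : Defs.path) := valid p && valid q && (pend p == q.1).

Lemma coef_nil (k : fieldType) p : coef (@nil (k * Defs.path)) p = 0.
Proof. by rewrite /coef big_nil. Qed.

Lemma coef_cons (k : fieldType) (c : k) q x p :
  coef ((c, q) :: x) p = (if valid q && (q == p) then c else 0) + coef x p.
Proof. by rewrite /coef big_cons /=; case: ifP => _ //; rewrite add0r. Qed.

Lemma coef_cat (k : fieldType) (x y : kQ k) p : coef (x ++ y) p = coef x p + coef y p.
Proof. by rewrite /coef big_cat. Qed.

Lemma coef_scale (k : fieldType) (c : k) x p : coef (scaleQ c x) p = c * coef x p.
Proof.
elim: x => [|[a q] x IH]; first by rewrite /= !coef_nil mulr0.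
rewrite /scaleQ /= coef_cons -/(scaleQ c x) IH coef_cons mulrDr; congr (_ + _).
by case: ifP; rewrite ?mulr0.
Qed.

Lemma coef_sub (k : fieldType) (x y : kQ k) p : coef (subQ x y) p = coef x p - coef y p.
Proof. by rewrite /subQ /addQ coef_cat coef_scale mulN1r. Qed.

Lemma coef_pth (k : fieldType) q p : coef (pth k q) p = if valid q && (q == p) then 1 else 0.
Proof. by rewrite /pth coef_cons coef_nil addr0. Qed.

Definition Gsum (k : fieldType) n (s : seq (k * Defs.path * 'I_9 * Defs.path)) : kQ k :=
  flatten [seq scaleQ t.1.1.1 (mul3 (pth k t.1.1.2) (gen k n t.1.2) (pth k t.2)) | t <- s].

Lemma Gsum_cat (k : fieldType) n (s1 s2 : seq (k * Defs.path * 'I_9 * Defs.path)) p :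
  coef (Gsum n (s1 ++ s2)) p = coef (Gsum n s1) p + coef (Gsum n s2) p.
Proof. by rewrite /Gsum map_cat flatten_cat coef_cat. Qed.

Lemma Gsum_scale (k : fieldType) n (c : k) (s : seq (k * Defs.path * 'I_9 * Defs.path)) p :
  coef (Gsum n [seq (c * t.1.1.1, t.1.1.2, t.1.2, t.2) | t <- s]) p = c * coef (Gsum n s) p.
Proof.
elim: s => [|t s IH]; first by rewrite /Gsum /= coef_nil mulr0.
rewrite /Gsum /= !coef_cat -/(Gsum _ _) IH !coef_scale mulrDr mulrA //.
Qed.

Lemma inI_lin (k : fieldType) n (x y z : kQ k) (a c : k) :
  inI n x -> inI n y -> (forall p, coef z p = a * coef x p + c * coef y p) -> inI n z.
Proof.
move=> [s1 H1] [s2 H2] Hz.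
exists ([seq (a * t.1.1.1, t.1.1.2, t.1.2, t.2) | t <- s1] ++
        [seq (c * t.1.1.1, t.1.1.2, t.1.2, t.2) | t <- s2]) => p.
by rewrite -/(Gsum _ _) Gsum_cat !Gsum_scale /Gsum -H1 -H2 Hz.
Qed.

Lemma inI_0 (k : fieldType) n (z : kQ k) : (forall p, coef z p = 0) -> inI n z.
Proof. by move=> H; exists [::] => p; rewrite H /= coef_nil. Qed.

Lemma inI_gen (k : fieldType) n u j v : inI n (mul3 (pth k u) (gen k n j) (pth k v)).
Proof.
by exists [:: (1, u, j, v)] => p; rewrite /= cats0 coef_scale mul1r.
Qed.

Lemma inI_eqcoef (k : fieldType) n (x z : kQ k) :
  inI n x -> (forall p, coef z p = coef x p) -> inI n z.
Proof.
move=> Hx H; apply: (inI_lin (a := 1) (c := 0) Hx Hx) => p.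
by rewrite H mul1r mul0r addr0.
Qed.

Lemma mulQ_nil_l (k : fieldType) (y : kQ k) : mulQ [::] y = [::].
Proof. by []. Qed.

Lemma mulQ_cons_l (k : fieldType) (t : k * Defs.path) (x y : kQ k) :
  mulQ (t :: x) y = mulQ [:: t] y ++ mulQ x y.
Proof. by rewrite /mulQ /= cats0. Qed.

Lemma mulQ1_nil (k : fieldType) (t : k * Defs.path) : mulQ [:: t] [::] = [::].
Proof. by []. Qed.

Lemma mulQ1_cons (k : fieldType) (t u : k * Defs.path) (y : kQ k) :
  mulQ [:: t] (u :: y) =
  (if compat t.2 u.2 then [:: (t.1 * u.1, (t.2.1, t.2.2 ++ u.2.2))] else [::]) ++ mulQ [:: t] y.
Proof. by rewrite /mulQ /= /compat; case: ifP. Qed.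

Lemma mulQ_cat_l (k : fieldType) (x1 x2 y : kQ k) : mulQ (x1 ++ x2) y = mulQ x1 y ++ mulQ x2 y.
Proof. by rewrite /mulQ map_cat flatten_cat. Qed.

Lemma composable_cat (v : vertex) w1 w2 :
  composable v (w1 ++ w2) = composable v w1 && composable (last v (map tgt w1)) w2.
Proof. by elim: w1 v => [|a w1 IH] v //=; rewrite IH andbA. Qed.

Lemma valid_ctx b W' a e s u v :
  valid (a, b :: W') -> pend (a, b :: W') = e ->
  valid (s, u ++ (b :: W') ++ v) = [&& valid (s, u), pend (s, u) == a & valid (e, v)].
Proof.
rewrite /valid /pend /= => /andP [/eqP Hb HW'] He.
rewrite composable_cat /= composable_cat HW' He Hb /= eq_sym.
by case: (composable s u).
Qed.

Lemma pend_ctx b W' a e s u :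
  pend (a, b :: W') = e -> pend (s, u ++ b :: W') = e.
Proof. by rewrite /pend /= map_cat last_cat. Qed.

Definition optQ (k : fieldType) (s : vertex) (o : option (seq arrow)) : kQ k :=
  if o is Some w then pth k (s, w) else [::].

Lemma gen_step (k : fieldType) n (j : 'I_9) a e W1 W2o (c1 c2 : k)
 (Hg : gen k n j = (c1, (a, W1)) :: (if W2o is Some W2 then [:: (c2, (a, W2))] else [::]))
 (H1 : c1 = 1) (H2 : c2 = -1) (HW1 : W1 != [::]) (V1 : valid (a, W1)) (E1 : pend (a, W1) = e)
 (HW2 : forall W2, W2o = Some W2 -> [/\ W2 != [::], valid (a, W2) & pend (a, W2) = e]) s u v :
 inI n (subQ (pth k (s, u ++ W1 ++ v)) (optQ k s (omap (fun w => u ++ w ++ v) W2o))).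
Proof.
case: W1 HW1 V1 E1 Hg => [//|b1 W1'] _ V1 E1 Hg.
case C: [&& valid (s, u), pend (s, u) == a & valid (e, v)].
- apply: (inI_eqcoef (inI_gen k n (s, u) j (e, v))) => p.
  move/and3P: C => [Vu /eqP Pu Vv].
  have cA : compat (s, u) (a, b1 :: W1') by rewrite /compat Vu V1 Pu eqxx.
  have cB : compat (s, u ++ b1 :: W1') (e, v).
    rewrite /compat (pend_ctx _ _ E1) eqxx Vv andbT.
    by have := valid_ctx s u [::] V1 E1; rewrite cats0 Vu Pu eqxx /valid /= => ->.
  rewrite /mul3 Hg /pth; case: W2o HW2 Hg => [W2|] HW2 Hg.
  + have [] := HW2 W2 erefl; case: W2 {HW2 Hg} => [//|b2 W2'] _ V2 E2.
    have cA2 : compat (s, u) (a, b2 :: W2') by rewrite /compat Vu V2 Pu eqxx.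
    have cB2 : compat (s, u ++ b2 :: W2') (e, v).
      rewrite /compat (pend_ctx _ _ E2) eqxx Vv andbT.
      by have := valid_ctx s u [::] V2 E2; rewrite cats0 Vu Pu eqxx /valid /= => ->.
    rewrite !mulQ1_cons !mulQ1_nil /= cA cA2 /= mulQ_cons_l !mulQ1_cons !mulQ1_nil /= cB cB2 /=.
    rewrite coef_sub /optQ /= !coef_pth !coef_cons coef_nil -!catA /= !mulr1 !mul1r H1 H2.
    by case: (valid _ && _); case: (valid _ && _); ring.
  + rewrite !mulQ1_cons !mulQ1_nil /= cA /= !mulQ1_cons !mulQ1_nil /= cB /=.
    by rewrite coef_sub /optQ /= !coef_pth !coef_cons ?coef_nil -!catA /= !mulr1 !mul1r H1 subr0 addr0.
- apply: inI_0 => p; rewrite coef_sub coef_pth (valid_ctx s u v V1 E1) C /=.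
  case: W2o HW2 {Hg} => [W2|] HW2 /=; last by rewrite coef_nil subr0.
  have [] := HW2 W2 erefl; case: W2 {HW2} => [//|b2 W2'] _ V2 E2.
  by rewrite coef_pth (valid_ctx s u v V2 E2) C /= subr0.
Qed.

Definition rep (j : nat) (w : seq arrow) := iter j (cat w) [::].

Lemma repS j w : rep j.+1 w = w ++ rep j w. Proof. by []. Qed.
Lemma repSr j w : rep j.+1 w = rep j w ++ w.
Proof. elim: j => [|j IH]; first by rewrite /= cats0. by rewrite repS {1}IH catA. Qed.
Lemma rep_shift j x y : x ++ rep j (y ++ x) = rep j (x ++ y) ++ x.
Proof. elim: j => [|j IH]; first by rewrite /= cats0. by rewrite !repS -!catA IH. Qed.

Lemma last_HD m : last v3 (map tgt (rep m [:: aH; aD])) = v3.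
Proof. by elim: m. Qed.
Lemma comp_HD m : composable v3 (rep m [:: aH; aD]).
Proof. by elim: m. Qed.
Lemma last_DH m : last v2 (map tgt (rep m [:: aD; aH])) = v2.
Proof. by elim: m. Qed.
Lemma comp_DH m : composable v2 (rep m [:: aD; aH]).
Proof. by elim: m. Qed.

Lemma powzE (k : fieldType) m :
  powz (h k) (d k) m (h k) = [:: (1, (v3, rep m [:: aH; aD] ++ [:: aH]))].
Proof.
elim: m => [//|m IH]; rewrite /powz iterS -/(powz _ _ m _) IH.
rewrite /= mulQ1_cons mulQ1_nil /compat /valid /= composable_cat comp_HD last_HD /=.
by rewrite !mulr1.
Qed.

Lemma powzE2 (k : fieldType) m :
  powz (d k) (h k) m (d k) = [:: (1, (v2, rep m [:: aD; aH] ++ [:: aD]))].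
Proof.
elim: m => [//|m IH]; rewrite /powz iterS -/(powz _ _ m _) IH.
rewrite /= mulQ1_cons mulQ1_nil /compat /valid /= composable_cat comp_DH last_DH /=.
by rewrite !mulr1.
Qed.

Definition genL (j : nat) : seq arrow :=
  match j with
  | 0 => [:: aB; aD] | 1 => [:: aH; aG] | 2 => [:: aD; aL] | 3 => [:: aK; aH]
  | 4 => [:: aL; aB] | 5 => [:: aG; aK] | 6 => [:: aG; aB; aD] | 7 => [:: aD; aH; aG]
  | _ => [:: aL; aK; aH] end.
Definition genR (m j : nat) : option (seq arrow) :=
  match j with
  | 0 => Some [:: aK; aL; aK] | 1 => Some [:: aL; aK; aL] | 2 => Some [:: aG; aB; aG]
  | 3 => Some [:: aB; aG; aB] | 4 => Some (rep m [:: aH; aD] ++ [:: aH])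
  | 5 => Some (rep m [:: aD; aH] ++ [:: aD]) | _ => None end.

Ltac gsolve := try (rewrite /gen /= ?powzE ?powzE2; reflexivity);
  try (by rewrite /= ?mul1r ?mulr1);
  try (by move=> W2 [<-]; rewrite /valid /pend /= ?composable_cat ?comp_HD ?last_HD ?comp_DH ?last_DH
           ?map_cat ?last_cat ?last_HD ?last_DH //; case: ((cpar _).-1)).

Lemma gen_ok (k : fieldType) n (j : 'I_9) s u v :
  inI n (subQ (pth k (s, u ++ genL j ++ v)) (optQ k s (omap (fun w => u ++ w ++ v) (genR (cpar n).-1 j)))).
Proof.
case: j => [[|[|[|[|[|[|[|[|[|//]]]]]]]]] Hj].
- eapply (@gen_step k n (Ordinal Hj) v1 v3); gsolve.
- eapply (@gen_step k n (Ordinal Hj) v3 v1); gsolve.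
- eapply (@gen_step k n (Ordinal Hj) v2 v1); gsolve.
- eapply (@gen_step k n (Ordinal Hj) v1 v2); gsolve.
- eapply (@gen_step k n (Ordinal Hj) v3 v2); gsolve.
- eapply (@gen_step k n (Ordinal Hj) v2 v3); gsolve.
- eapply (@gen_step k n (Ordinal Hj) v2 v3 _ None); gsolve.
- eapply (@gen_step k n (Ordinal Hj) v2 v1 _ None); gsolve.
- eapply (@gen_step k n (Ordinal Hj) v3 v2 _ None); gsolve.
Qed.

Inductive conv (m : nat) : option (seq arrow) -> option (seq arrow) -> Prop :=
| cv_refl x : conv m x x
| cv_sym x y : conv m x y -> conv m y x
| cv_trans x y z : conv m x y -> conv m y z -> conv m x z
| cv_gen (j : 'I_9) u v : conv m (Some (u ++ genL j ++ v)) (omap (fun w => u ++ w ++ v) (genR m j)).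

Lemma conv_inI (k : fieldType) n x y :
  conv (cpar n).-1 x y -> forall s, inI n (subQ (optQ k s x) (optQ k s y)).
Proof.
elim=> {x y} [x|x y _ IH|x y z _ IH1 _ IH2|j u v] s.
- by apply: inI_0 => p; rewrite coef_sub subrr.
- apply: (inI_lin (a := -1) (c := 0) (IH s) (IH s)) => p.
  by rewrite !coef_sub; ring.
- apply: (inI_lin (a := 1) (c := 1) (IH1 s) (IH2 s)) => p.
  by rewrite !coef_sub; ring.
- exact: gen_ok.
Qed.

Lemma conv_r m x y w : conv m x y -> conv m (omap (cat^~ w) x) (omap (cat^~ w) y).
Proof.
elim=> {x y} [x|x y _ IH|x y z _ IH1 _ IH2|j u v].
- exact: cv_refl.
- exact: cv_sym.
- exact: cv_trans IH1 IH2.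
- have := cv_gen m j u (v ++ w); rewrite /= -!catA.
  by case: (genR m j) => [r|] //=; rewrite -!catA.
Qed.

Lemma conv_l m x y w : conv m x y -> conv m (omap (cat w) x) (omap (cat w) y).
Proof.
elim=> {x y} [x|x y _ IH|x y z _ IH1 _ IH2|j u v].
- exact: cv_refl.
- exact: cv_sym.
- exact: cv_trans IH1 IH2.
- have := cv_gen m j (w ++ u) v; rewrite /= -!catA.
  by case: (genR m j) => [r|] //=; rewrite -!catA.
Qed.

Lemma cvS m j (Hj : (j < 9)%N) u v W W' :
  W = u ++ genL j ++ v -> Some W' = omap (fun w => u ++ w ++ v) (genR m j) ->
  conv m (Some W) (Some W').
Proof. by move=> -> ->; exact: (cv_gen m (Ordinal Hj)). Qed.

Lemma cvZ m j (Hj : (j < 9)%N) u v W :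
  W = u ++ genL j ++ v -> genR m j = None -> conv m (Some W) None.
Proof. by move=> -> HR; have := cv_gen m (Ordinal Hj) u v; rewrite /= HR. Qed.

Lemma cvZctx m W u v : conv m (Some W) None -> conv m (Some (u ++ W ++ v)) None.
Proof. by move=> H; have := conv_l u (conv_r v H). Qed.

Lemma cvT m x y z : conv m x y -> conv m y z -> conv m x z.
Proof. exact: cv_trans. Qed.
Lemma cvTs m x y z : conv m y x -> conv m y z -> conv m x z.
Proof. by move=> H1 H2; apply: cv_trans (cv_sym H1) H2. Qed.

Ltac wq := rewrite /= ?cats0 -?catA /= ?cats0; try reflexivity.
Lemma Z_bgk m : conv m.+1 (Some [:: aB; aG; aK]) None.
Proof.
apply: (cvT (y := Some ([:: aB] ++ rep m.+1 [:: aD; aH] ++ [:: aD]))).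
  apply: (cvS (j := 5) isT (u := [:: aB]) (v := [::])); wq.
apply: (cvT (y := Some ([:: aK; aL; aK; aH] ++ rep m [:: aD; aH] ++ [:: aD]))).
  apply: (cvS (j := 0) isT (u := [::]) (v := [:: aH] ++ rep m [:: aD; aH] ++ [:: aD])); wq.
apply: (cvZ (j := 8) isT (u := [:: aK]) (v := rep m [:: aD; aH] ++ [:: aD])); wq.
Qed.

Lemma rep_split j x y : rep j.+1 (x ++ y) = x ++ rep j (y ++ x) ++ y.
Proof. by rewrite repS -catA rep_shift. Qed.

Lemma rep_add i j w : rep (i + j)%N w = rep i w ++ rep j w.
Proof. by elim: i => [|i IH] //=; rewrite -/(rep _ _) IH catA. Qed.

Lemma cvZc m W u v W0 : conv m (Some W0) None -> W = u ++ W0 ++ v -> conv m (Some W) None.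
Proof. by move=> H ->; apply: cvZctx. Qed.

Lemma Z_klb m : conv m.+1 (Some [:: aK; aL; aB]) None.
Proof.
apply: (cvT (y := Some ([:: aK; aH; aD] ++ rep m [:: aH; aD] ++ [:: aH]))).
  apply: (cvS (j := 4) isT (u := [:: aK]) (v := [::])); wq.
apply: (cvT (y := Some ([:: aB; aG; aB; aD] ++ rep m [:: aH; aD] ++ [:: aH]))).
  apply: (cvS (j := 3) isT (u := [::]) (v := [:: aD] ++ rep m [:: aH; aD] ++ [:: aH])); wq.
apply: (cvZ (j := 6) isT (u := [:: aB]) (v := rep m [:: aH; aD] ++ [:: aH])); wq.
Qed.

Lemma Z_lklb m : conv m.+1 (Some [:: aL; aK; aL; aB]) None.
Proof.
apply: (cvT (y := Some ([:: aL; aK; aH; aD] ++ rep m [:: aH; aD] ++ [:: aH]))).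
  apply: (cvS (j := 4) isT (u := [:: aL; aK]) (v := [::])); wq.
apply: (cvZ (j := 8) isT (u := [::]) (v := [:: aD] ++ rep m [:: aH; aD] ++ [:: aH])); wq.
Qed.

Lemma Z_hgb m : conv m.+1 (Some [:: aH; aG; aB]) None.
Proof.
apply: (cvT (y := Some [:: aL; aK; aL; aB])); last exact: Z_lklb.
apply: (cvS (j := 1) isT (u := [::]) (v := [:: aB])); wq.
Qed.

Lemma Z_HDhg m j : conv m (Some (rep j.+1 [:: aH; aD] ++ [:: aH; aG])) None.
Proof.
apply: (cvZ (j := 7) isT (u := rep j [:: aH; aD] ++ [:: aH]) (v := [::])) => //.
by rewrite repSr -!catA.
Qed.

Lemma Z_DHg m j : conv m (Some (rep j.+1 [:: aD; aH] ++ [:: aG])) None.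
Proof.
apply: (cvZ (j := 7) isT (u := rep j [:: aD; aH]) (v := [::])) => //.
by rewrite repSr -!catA.
Qed.

Lemma Z_lbg m : conv m.+1 (Some [:: aL; aB; aG]) None.
Proof.
apply: (cvT (y := Some (rep m.+1 [:: aH; aD] ++ [:: aH; aG]))); last exact: Z_HDhg.
apply: (cvS (j := 4) isT (u := [::]) (v := [:: aG])); wq.
Qed.

Lemma Z_DHdl m j : conv m (Some (rep j.+1 [:: aD; aH] ++ [:: aD; aL])) None.
Proof.
apply: (cvT (y := Some (rep j.+1 [:: aD; aH] ++ [:: aG; aB; aG]))).
  apply: (cvS (j := 2) isT (u := rep j.+1 [:: aD; aH]) (v := [::])); wq.
apply: (cvZ (j := 7) isT (u := rep j [:: aD; aH]) (v := [:: aB; aG])) => //.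
by rewrite repSr -!catA.
Qed.

Lemma Z_gkl m : conv m.+1 (Some [:: aG; aK; aL]) None.
Proof.
apply: (cvT (y := Some (rep m.+1 [:: aD; aH] ++ [:: aD; aL]))); last exact: Z_DHdl.
apply: (cvS (j := 5) isT (u := [::]) (v := [:: aL])); wq.
Qed.

Lemma Z_gbgk m : conv m.+1 (Some [:: aG; aB; aG; aK]) None.
Proof.
apply: (cvT (y := Some ([:: aG; aB; aD; aH] ++ rep m [:: aD; aH] ++ [:: aD]))).
  apply: (cvS (j := 5) isT (u := [:: aG; aB]) (v := [::])); wq.
apply: (cvZ (j := 6) isT (u := [::]) (v := [:: aH] ++ rep m [:: aD; aH] ++ [:: aD])); wq.
Qed.

Lemma Z_dlk m : conv m.+1 (Some [:: aD; aL; aK]) None.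
Proof.
apply: (cvT (y := Some [:: aG; aB; aG; aK])); last exact: Z_gbgk.
apply: (cvS (j := 2) isT (u := [::]) (v := [:: aK])); wq.
Qed.

Lemma Z_bgbgb m : conv m.+1 (Some [:: aB; aG; aB; aG; aB]) None.
Proof.
apply: (cvTs (y := Some [:: aB; aD; aL; aB])).
  apply: (cvS (j := 2) isT (u := [:: aB]) (v := [:: aB])); wq.
apply: (cvT (y := Some [:: aK; aL; aK; aL; aB])).
  apply: (cvS (j := 0) isT (u := [::]) (v := [:: aL; aB])); wq.
apply: (cvZc (u := [:: aK; aL]) (v := [::]) (Z_klb m)); wq.
Qed.

Lemma Z_bgbgk m : conv m.+1 (Some [:: aB; aG; aB; aG; aK]) None.
Proof. apply: (cvZc (u := [:: aB; aG]) (v := [::]) (Z_bgk m)); wq. Qed.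

Lemma Z_hgbgb m : conv m.+1 (Some [:: aH; aG; aB; aG; aB]) None.
Proof.
apply: (cvT (y := Some [:: aL; aK; aL; aB; aG; aB])).
  apply: (cvS (j := 1) isT (u := [::]) (v := [:: aB; aG; aB])); wq.
apply: (cvZc (u := [::]) (v := [:: aG; aB]) (Z_lklb m)); wq.
Qed.

Lemma Z_lbgbg m : conv m.+1 (Some [:: aL; aB; aG; aB; aG]) None.
Proof. apply: (cvZc (u := [::]) (v := [:: aB; aG]) (Z_lbg m)); wq. Qed.

Lemma Z_DHd m : conv m.+1 (Some (rep m.+2 [:: aD; aH] ++ [:: aD])) None.
Proof.
rewrite (rep_split _ [:: aD] [:: aH]) /=.
apply: (cvTs (y := Some [:: aD; aL; aB; aD])).
  apply: (cvS (j := 4) isT (u := [:: aD]) (v := [:: aD])); wq.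
apply: (cvT (y := Some [:: aG; aB; aG; aB; aD])).
  apply: (cvS (j := 2) isT (u := [::]) (v := [:: aB; aD])); wq.
apply: (cvZ (j := 6) isT (u := [:: aG; aB]) (v := [::])); wq.
Qed.

Lemma Z_HDh m : conv m.+1 (Some (rep m.+2 [:: aH; aD] ++ [:: aH])) None.
Proof.
have -> : rep m.+2 [:: aH; aD] ++ [:: aH] = rep m.+1 [:: aH; aD] ++ [:: aH] ++ [:: aD; aH].
  by rewrite repSr -!catA.
apply: (cvTs (y := Some [:: aL; aB; aD; aH])).
  apply: (cvS (j := 4) isT (u := [::]) (v := [:: aD; aH])); wq.
apply: (cvT (y := Some [:: aL; aK; aL; aK; aH])).
  apply: (cvS (j := 0) isT (u := [:: aL]) (v := [:: aH])); wq.
apply: (cvZ (j := 8) isT (u := [:: aL; aK]) (v := [::])); wq.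
Qed.

Lemma Z_HDl m j : conv m.+1 (Some (rep j.+1 [:: aH; aD] ++ [:: aL])) None.
Proof.
apply: (cvT (y := Some (rep j [:: aH; aD] ++ [:: aH; aG; aB; aG]))).
  apply: (cvS (j := 2) isT (u := rep j [:: aH; aD] ++ [:: aH]) (v := [::])) => //.
  by rewrite repSr -!catA.
  by rewrite /= -!catA.
case: j => [|j].
- apply: (cvT (y := Some [:: aL; aK; aL; aB; aG])).
    apply: (cvS (j := 1) isT (u := [::]) (v := [:: aB; aG])); wq.
  apply: (cvZc (u := [::]) (v := [:: aG]) (Z_lklb m)); wq.
- apply: (cvZ (j := 7) isT (u := rep j [:: aH; aD] ++ [:: aH]) (v := [:: aB; aG])) => //.
  by rewrite repSr -!catA.
Qed.

Lemma Z_bDH m j : conv m.+1 (Some ([:: aB] ++ rep j.+1 [:: aD; aH])) None.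
Proof.
apply: (cvT (y := Some ([:: aK; aL; aK; aH] ++ rep j [:: aD; aH]))).
  apply: (cvS (j := 0) isT (u := [::]) (v := [:: aH] ++ rep j [:: aD; aH])); wq.
apply: (cvZ (j := 8) isT (u := [:: aK]) (v := rep j [:: aD; aH])); wq.
Qed.

Lemma Z_kHD m j : conv m.+1 (Some ([:: aK] ++ rep j.+1 [:: aH; aD])) None.
Proof.
apply: (cvT (y := Some ([:: aB; aG; aB; aD] ++ rep j [:: aH; aD]))).
  apply: (cvS (j := 3) isT (u := [::]) (v := [:: aD] ++ rep j [:: aH; aD])); wq.
apply: (cvZ (j := 6) isT (u := [:: aB]) (v := rep j [:: aH; aD])); wq.
Qed.

Inductive form := F1e | F1b | F1k | F1bg | F1kl | F1bgb | F1klk | F1bgbg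
 | F2e | F2g | F2gb | F2gbg | F2dd of nat | F2de of nat
 | F3e | F3l | F3lk | F3lkl | F3hh of nat | F3hd of nat.

Definition word (f : form) : seq arrow :=
  match f with
  | F1e => [::] | F1b => [:: aB] | F1k => [:: aK] | F1bg => [:: aB; aG] | F1kl => [:: aK; aL]
  | F1bgb => [:: aB; aG; aB] | F1klk => [:: aK; aL; aK] | F1bgbg => [:: aB; aG; aB; aG]
  | F2e => [::] | F2g => [:: aG] | F2gb => [:: aG; aB] | F2gbg => [:: aG; aB; aG]
  | F2dd j => rep j [:: aD; aH] ++ [:: aD] | F2de j => rep j.+1 [:: aD; aH]
  | F3e => [::] | F3l => [:: aL] | F3lk => [:: aL; aK] | F3lkl => [:: aL; aK; aL]
  | F3hh j => rep j [:: aH; aD] ++ [:: aH] | F3hd j => rep j.+1 [:: aH; aD]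
  end.

Definition fs (f : form) : vertex :=
  match f with
  | F1e | F1b | F1k | F1bg | F1kl | F1bgb | F1klk | F1bgbg => v1
  | F2e | F2g | F2gb | F2gbg | F2dd _ | F2de _ => v2
  | _ => v3 end.

Definition fe (f : form) : vertex :=
  match f with
  | F1e | F1bg | F1kl | F1bgbg | F2g | F2gbg | F3l | F3lkl => v1
  | F1b | F1bgb | F2e | F2gb | F2de _ | F3hh _ => v2
  | _ => v3 end.

Lemma Z_DHd_ge m j : (m < j)%N -> conv m.+1 (Some (rep j.+1 [:: aD; aH] ++ [:: aD])) None.
Proof.
move=> Hj; have -> : j.+1 = ((j - m.+1) + m.+2)%N by rewrite addnS subnK.
rewrite rep_add -catA.
apply: (cvZc (u := rep (j - m.+1) [:: aD; aH]) (v := [::]) (Z_DHd m)); wq.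
Qed.

Lemma Z_HDh_ge m j : (m < j)%N -> conv m.+1 (Some (rep j.+1 [:: aH; aD] ++ [:: aH])) None.
Proof.
move=> Hj; have -> : j.+1 = ((j - m.+1) + m.+2)%N by rewrite addnS subnK.
rewrite rep_add -catA.
apply: (cvZc (u := rep (j - m.+1) [:: aH; aD]) (v := [::]) (Z_HDh m)); wq.
Qed.

Ltac Rt f := right; exists f; split; [| by split].

Lemma step m f a : src a = fe f ->
  conv m.+1 (Some (word f ++ [:: a])) None \/
  exists f', conv m.+1 (Some (word f ++ [:: a])) (Some (word f')) /\ fs f' = fs f /\ fe f' = tgt a.
Proof.
case: f => [||||||||||||j|j|||||j|j]; case: a => [[|[|[|[|[|[|//]]]]]] Ha] //= Hs.
all: try by []. all: have -> : Ha = isT by exact: bool_irrelevance.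
- Rt F1b; exact: cv_refl.
- Rt F1k; exact: cv_refl.
- Rt F1bg; exact: cv_refl.
- Rt F1klk; apply: (cvS (j := 0) isT (u := [::]) (v := [::])); wq.
- Rt F1bgb; apply: (cvS (j := 3) isT (u := [::]) (v := [::])); wq.
- Rt F1kl; exact: cv_refl.
- Rt F1bgb; exact: cv_refl.
- left; exact: Z_bgk.
- left; exact: Z_klb.
- Rt F1klk; exact: cv_refl.
- Rt F1bgbg; exact: cv_refl.
- left; apply: (cvZ (j := 6) isT (u := [:: aB]) (v := [::])); wq.
- left; apply: (cvZ (j := 8) isT (u := [:: aK]) (v := [::])); wq.
- Rt F1bgbg; apply: (cvTs (y := Some [:: aK; aH; aG])).
    apply: (cvS (j := 1) isT (u := [:: aK]) (v := [::])); wq.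
  apply: (cvS (j := 3) isT (u := [::]) (v := [:: aG])); wq.
- left; exact: Z_bgbgb.
- left; exact: Z_bgbgk.
- Rt F2g; exact: cv_refl.
- Rt (F2dd 0); exact: cv_refl.
- Rt F2gb; exact: cv_refl.
- Rt (F2dd m.+1); apply: (cvS (j := 5) isT (u := [::]) (v := [::])); wq.
- Rt F2gbg; exact: cv_refl.
- left; apply: (cvZ (j := 6) isT (u := [::]) (v := [::])); wq.
- Rt (F2de m.+1).
  have -> : word (F2de m.+1) = [:: aD] ++ rep m.+1 [:: aH; aD] ++ [:: aH] by rewrite /word (rep_split _ [:: aD] [:: aH]).
  apply: (cvTs (y := Some [:: aD; aL; aB])).
    apply: (cvS (j := 2) isT (u := [::]) (v := [:: aB])); wq.
  apply: (cvS (j := 4) isT (u := [:: aD]) (v := [::])); wq.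
- left; exact: Z_gbgk.
- Rt (F2de j); rewrite /word repSr -catA; exact: cv_refl.
- case: j => [|j].
  + Rt F2gbg; apply: (cvS (j := 2) isT (u := [::]) (v := [::])); wq.
  + left; rewrite -catA; exact: Z_DHdl.
- left; exact: Z_DHg.
- case: (leqP j m) => Hj.
  + Rt (F2dd j.+1); exact: cv_refl.
  + left; exact: (Z_DHd_ge Hj).
- Rt (F3hh 0); exact: cv_refl.
- Rt F3l; exact: cv_refl.
- Rt (F3hh m.+1); apply: (cvS (j := 4) isT (u := [::]) (v := [::])); wq.
- Rt F3lk; exact: cv_refl.
- left; apply: (cvZ (j := 8) isT (u := [::]) (v := [::])); wq.
- Rt F3lkl; exact: cv_refl.
- left; exact: Z_lklb.
- Rt (F3hd m.+1).
  have -> : word (F3hd m.+1) = [:: aH] ++ rep m.+1 [:: aD; aH] ++ [:: aD] by rewrite /word (rep_split _ [:: aH] [:: aD]).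
  apply: (cvTs (y := Some [:: aH; aG; aK])).
    apply: (cvS (j := 1) isT (u := [::]) (v := [:: aK])); wq.
  apply: (cvS (j := 5) isT (u := [:: aH]) (v := [::])); wq.
- case: j => [|j].
  + Rt F3lkl; apply: (cvS (j := 1) isT (u := [::]) (v := [::])); wq.
  + left; rewrite -catA; exact: Z_HDhg.
- Rt (F3hd j); rewrite /word repSr -catA; exact: cv_refl.
- case: (leqP j m) => Hj.
  + Rt (F3hh j.+1); exact: cv_refl.
  + left; exact: (Z_HDh_ge Hj).
- left; exact: Z_HDl.
Qed.

Lemma NF m i w : composable i w -> exists o, conv m.+1 (Some w) o /\
  (o = None \/ exists f, o = Some (word f) /\ fs f = i /\ fe f = last i (map tgt w)).
Proof.
elim/last_ind: w => [|w a IH].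
  move=> _; exists (Some [::]); split; first exact: cv_refl.
  right; case: i => [[|[|[|//]]] Hi]; have -> : Hi = isT by exact: bool_irrelevance.
  - by exists F1e.
  - by exists F2e.
  - by exists F3e.
rewrite -cats1 composable_cat /= andbT => /andP [Hw /eqP Ha].
have [o [Hc Ho]] := IH Hw.
have Hc' := conv_r [:: a] Hc.
case: Ho => [Eo|[f [Eo [Hfs Hfe]]]]; subst o.
  by exists None; split => //; left.
rewrite -Hfe in Ha; have [Hz|[f' [Hc2 [Hs2 He2]]]] := step m Ha.
  by exists None; split => //; [exact: cvT Hc' Hz | left].
exists (Some (word f')); split; first exact: cvT Hc' Hc2.
by right; exists f'; rewrite Hs2 Hfs He2 map_cat last_cat.
Qed.

Definition Cunit (v : vertex) : option (seq arrow) := Some [::].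
Definition Cb (v : vertex) : option (seq arrow) :=
  match nat_of_ord v with 0 => Some [:: aB; aG] | 1 => Some [:: aG; aB] | _ => None end.
Definition Ck (v : vertex) : option (seq arrow) :=
  match nat_of_ord v with 0 => Some [:: aK; aL] | 1 => None | _ => Some [:: aL; aK] end.
Definition Cs (v : vertex) : option (seq arrow) :=
  match nat_of_ord v with 0 => Some [:: aB; aG; aB; aG] | 1 => Some [:: aG; aB; aG; aB] | _ => None end.
Definition Cd (j : nat) (v : vertex) : option (seq arrow) :=
  match nat_of_ord v with 0 => None | 1 => Some (rep j.+1 [:: aD; aH]) | _ => Some (rep j.+1 [:: aH; aD]) end.

Definition Cgood (C : vertex -> option (seq arrow)) :=
  forall v w, C v = Some w -> valid (v, w) && (pend (v, w) == v).
Definition Ccomm m (C : vertex -> option (seq arrow)) :=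
  forall a, conv m (omap (cat^~ [:: a]) (C (src a))) (omap (cat [:: a]) (C (tgt a))).

Ltac vcase v := case: v => [[|[|[|//]]] Hv]; have -> : Hv = isT by exact: bool_irrelevance.
Ltac acase a := case: a => [[|[|[|[|[|[|//]]]]]] Ha]; have -> : Ha = isT by exact: bool_irrelevance.

Lemma good_unit : Cgood Cunit. Proof. by move=> v w [<-]; rewrite /valid /pend /= eqxx. Qed.
Lemma good_b : Cgood Cb. Proof. by move=> v w; vcase v => //= [[<-]|[<-]]. Qed.
Lemma good_k : Cgood Ck. Proof. by move=> v w; vcase v => //= [[<-]|[<-]]. Qed.
Lemma good_s : Cgood Cs. Proof. by move=> v w; vcase v => //= [[<-]|[<-]]. Qed.
Lemma good_d j : Cgood (Cd j). 
Proof.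
move=> v w; vcase v => //= [[<-]|[<-]]; rewrite /valid /pend /=.
- by rewrite comp_DH last_DH.
- by rewrite comp_HD last_HD.
Qed.

Lemma comm_unit m : Ccomm m Cunit. Proof. by move=> a; exact: cv_refl. Qed.
Lemma comm_b m : Ccomm m.+1 Cb.
Proof.
move=> a; acase a => /=.
- exact: cv_refl.
- exact: cv_refl.
- apply: (cvZ (j := 6) isT (u := [::]) (v := [::])); wq.
- exact: cv_sym (Z_hgb m).
- exact: Z_bgk.
- exact: cv_sym (Z_lbg m).
Qed.
Lemma comm_k m : Ccomm m.+1 Ck.
Proof.
move=> a; acase a => /=.
- exact: Z_klb.
- exact: cv_sym (Z_gkl m).
- exact: cv_sym (Z_dlk m).
- apply: (cvZ (j := 8) isT (u := [::]) (v := [::])); wq.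
- exact: cv_refl.
- exact: cv_refl.
Qed.
Lemma comm_s m : Ccomm m.+1 Cs.
Proof.
move=> a; acase a => /=.
- exact: cv_refl.
- exact: cv_refl.
- apply: (cvZ (j := 6) isT (u := [:: aG; aB]) (v := [::])); wq.
- exact: cv_sym (Z_hgbgb m).
- exact: Z_bgbgk.
- exact: cv_sym (Z_lbgbg m).
Qed.
Lemma comm_d m j : Ccomm m.+1 (Cd j).
Proof.
move=> a; acase a; rewrite /Cd /=.
- exact: cv_sym (Z_bDH m j).
- exact: Z_DHg.
- have := rep_shift j.+1 [:: aD] [:: aH]; rewrite /= => ->; exact: cv_refl.
- have := rep_shift j.+1 [:: aH] [:: aD]; rewrite /= => ->; exact: cv_refl.
- exact: cv_sym (Z_kHD m j).
- exact: Z_HDl.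
Qed.

Lemma ne12 : (v1 == v2) = false. Proof. by []. Qed.
Lemma ne13 : (v1 == v3) = false. Proof. by []. Qed.
Lemma ne21 : (v2 == v1) = false. Proof. by []. Qed.
Lemma ne23 : (v2 == v3) = false. Proof. by []. Qed.
Lemma ne31 : (v3 == v1) = false. Proof. by []. Qed.
Lemma ne32 : (v3 == v2) = false. Proof. by []. Qed.
Definition neE := (ne12, ne13, ne21, ne23, ne31, ne32).

Definition zQ (k : fieldType) (C : vertex -> option (seq arrow)) : kQ k :=
  optQ k v1 (C v1) ++ optQ k v2 (C v2) ++ optQ k v3 (C v3).

Lemma comm_path m C : Ccomm m C -> forall v w, composable v w ->
  conv m (omap (cat^~ w) (C v)) (omap (cat w) (C (last v (map tgt w)))).
Proof.
move=> HC v w; elim: w v => [|a w IH] v Hc.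
  by rewrite /=; case: (C v) => [r|] /=; rewrite ?cats0; exact: cv_refl.
move: Hc => /= /andP [/eqP Ha Hw].
have H1 := conv_r w (HC a); have H2 := conv_l [:: a] (IH _ Hw).
rewrite Ha in H1.
have E1 : omap (cat^~ (a :: w)) (C v) = omap (cat^~ w) (omap (cat^~ [:: a]) (C v)).
  by case: (C v) => [r|] //=; rewrite -catA.
have E2 : omap (cat^~ w) (omap (cat [:: a]) (C (tgt a))) = omap (cat [:: a]) (omap (cat^~ w) (C (tgt a))).
  by case: (C (tgt a)) => [r|].
have E3 : omap (cat [:: a]) (omap (cat w) (C (last (tgt a) (map tgt w)))) =
          omap (cat (a :: w)) (C (last (tgt a) (map tgt w))).
  by case: (C _) => [r|].
rewrite E1; apply: cvT; first exact: H1.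
rewrite E2 -E3; exact: H2.
Qed.

Definition mul1 (k : fieldType) (t : k * Defs.path) (y : kQ k) : kQ k :=
  [seq (t.1 * u.1, (t.2.1, t.2.2 ++ u.2.2)) | u <- y & compat t.2 u.2].

Lemma mulQ1E (k : fieldType) (t : k * Defs.path) (y : kQ k) : mulQ [:: t] y = mul1 t y.
Proof. by rewrite /mulQ /= cats0. Qed.

Lemma mul1_cons (k : fieldType) (t u : k * Defs.path) (y : kQ k) :
  mul1 t (u :: y) = (if compat t.2 u.2 then [:: (t.1 * u.1, (t.2.1, t.2.2 ++ u.2.2))] else [::]) ++ mul1 t y.
Proof. by rewrite /mul1 /=; case: ifP. Qed.

Lemma mul1_nil (k : fieldType) (t : k * Defs.path) : mul1 t [::] = [::].
Proof. by []. Qed.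

Lemma mulQ_consE (k : fieldType) (t : k * Defs.path) (x y : kQ k) :
  mulQ (t :: x) y = mul1 t y ++ mulQ x y.
Proof. by rewrite mulQ_cons_l mulQ1E. Qed.

Lemma mul1_cat (k : fieldType) (t : k * Defs.path) (x y : kQ k) :
  mul1 t (x ++ y) = mul1 t x ++ mul1 t y.
Proof. by rewrite /mul1 filter_cat map_cat. Qed.

Lemma coef_mulQ_cons_r (k : fieldType) (x : kQ k) u y p :
  coef (mulQ x (u :: y)) p = coef (mulQ x [:: u]) p + coef (mulQ x y) p.
Proof.
elim: x => [|t x IH]; first by rewrite /= !coef_nil addr0.
rewrite !mulQ_consE !(mul1_cons _ u) (mul1_nil t) cats0 !coef_cat IH.
by rewrite addrACA.
Qed.

Lemma coef_mulQ_nil_r (k : fieldType) (x : kQ k) p : coef (mulQ x [::]) p = 0.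
Proof. by elim: x => [|t x IH]; rewrite ?coef_nil // mulQ_consE mul1_nil IH. Qed.

Lemma coef_mulQ_single_r (k : fieldType) (x : kQ k) (c : k) q p :
  coef (mulQ x [:: (c, q)]) p = c * coef (mulQ x (pth k q)) p.
Proof.
elim: x => [|t x IH]; first by rewrite /= !coef_nil mulr0.
rewrite /pth !mulQ_consE !(mul1_cons _ (c, q)) !(mul1_cons _ (1, q)) !(mul1_nil t) !coef_cat IH -/(pth k q) /=.
case: (compat _ _); rewrite ?coef_cons ?coef_nil; last by ring.
by case: (valid _ && _); rewrite ?mulr0; ring.
Qed.

Lemma coef_mul1_single (k : fieldType) (z : kQ k) (c : k) q p :
  coef (mul1 (c, q) z) p = c * coef (mul1 (1, q) z) p.
Proof.
elim: z => [|u z IH]; first by rewrite /= !coef_nil mulr0.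
rewrite !(mul1_cons _ u) !coef_cat IH mulrDr /=.
case: (compat _ _); rewrite ?coef_cons ?coef_nil; last by ring.
by case: (valid _ && _); rewrite ?mulr0; ring.
Qed.

Lemma coef_mulQ_single_l (k : fieldType) (z : kQ k) (c : k) q p :
  coef (mulQ [:: (c, q)] z) p = c * coef (mulQ (pth k q) z) p.
Proof. by rewrite /pth !mulQ1E coef_mul1_single. Qed.

Lemma coef_mulQ_cat_r (k : fieldType) (y z1 z2 : kQ k) p :
  coef (mulQ y (z1 ++ z2)) p = coef (mulQ y z1) p + coef (mulQ y z2) p.
Proof.
elim: y => [|t y IH]; first by rewrite /= !coef_nil addr0.
by rewrite !mulQ_consE mul1_cat !coef_cat IH addrACA.
Qed.

Lemma coef_mulQ_scale_l (k : fieldType) (z y : kQ k) (c : k) p :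
  coef (mulQ (scaleQ c z) y) p = c * coef (mulQ z y) p.
Proof.
elim: z => [|[a r] z IH]; first by rewrite /= !coef_nil mulr0.
rewrite /scaleQ /= -/(scaleQ c z) !mulQ_consE !coef_cat IH mulrDr.
by rewrite coef_mul1_single [in RHS]coef_mul1_single mulrA.
Qed.

Lemma coef_mulQ_scale_r (k : fieldType) (y z : kQ k) (c : k) p :
  coef (mulQ y (scaleQ c z)) p = c * coef (mulQ y z) p.
Proof.
elim: y => [|t y IH]; first by rewrite /= !coef_nil mulr0.
rewrite !mulQ_consE !coef_cat IH mulrDr; congr (_ + _).
clear IH; elim: z => [|u z IHz]; first by rewrite /= !coef_nil mulr0.
rewrite /scaleQ /= -/(scaleQ c z) (mul1_cons _ (c * u.1, u.2)) (mul1_cons _ u) !coef_cat IHz mulrDr /=.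
case: (compat _ _); rewrite ?coef_cons ?coef_nil; last by ring.
by case: (valid _ && _); rewrite ?mulr0; ring.
Qed.

Lemma central_nil (k : fieldType) n : centralI n (@nil (k * Defs.path)).
Proof. by move=> y; apply: inI_0 => p; rewrite coef_sub coef_mulQ_nil_r coef_nil subrr. Qed.

Lemma central_cat (k : fieldType) n (z1 z2 : kQ k) :
  centralI n z1 -> centralI n z2 -> centralI n (z1 ++ z2).
Proof.
move=> H1 H2 y; apply: (inI_lin (a := 1) (c := 1) (H1 y) (H2 y)) => p.
rewrite !coef_sub mulQ_cat_l coef_cat coef_mulQ_cat_r; ring.
Qed.

Lemma central_scale (k : fieldType) n (z : kQ k) (c : k) :
  centralI n z -> centralI n (scaleQ c z).
Proof.
move=> H y; apply: (inI_lin (a := c) (c := 0) (H y) (H y)) => p.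
rewrite !coef_sub coef_mulQ_scale_l coef_mulQ_scale_r; ring.
Qed.

Lemma central_paths (k : fieldType) n (z : kQ k) :
  (forall q, inI n (subQ (mulQ z (pth k q)) (mulQ (pth k q) z))) -> centralI n z.
Proof.
move=> H y; elim: y => [|[c q] y IH].
  by apply: inI_0 => p; rewrite coef_sub coef_mulQ_nil_r coef_nil subrr.
apply: (inI_lin (a := c) (c := 1) (H q) IH) => p.
rewrite !coef_sub coef_mulQ_cons_r mulQ_cons_l coef_cat coef_mulQ_single_r coef_mulQ_single_l.
ring.
Qed.

Lemma coef_optQ_ne (k : fieldType) (v : vertex) o p : v != p.1 -> coef (optQ k v o) p = 0.
Proof.
case: o => [w|] /= Hv; last by rewrite coef_nil.
rewrite coef_pth; case: p Hv => s w' /= Hv.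
by rewrite xpair_eqE (negbTE Hv) andbF.
Qed.

Lemma coef_zQ (k : fieldType) C p : coef (zQ k C) p = coef (optQ k p.1 (C p.1)) p.
Proof.
case: p => s w /=; rewrite /zQ !coef_cat.
case: s => [[|[|[|//]]] Hv]; have -> : Hv = isT by exact: bool_irrelevance.
- by rewrite (@coef_optQ_ne k v2) // (@coef_optQ_ne k v3) // !addr0.
- by rewrite (@coef_optQ_ne k v1) // (@coef_optQ_ne k v3) // add0r addr0.
- by rewrite (@coef_optQ_ne k v1) // (@coef_optQ_ne k v2) // !add0r.
Qed.

Lemma mul_opt_pth_r (k : fieldType) C v q : Cgood C -> valid q ->
  mulQ (optQ k v (C v)) (pth k q) = if v == q.1 then optQ k v (omap (cat^~ q.2) (C v)) else [::].
Proof.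
move=> HG Vq; rewrite /optQ; case E: (C v) => [w|] /=; last by case: (v == q.1).
have /andP [Vw /eqP Pw] := HG v w E.
rewrite /pth mulQ1E (mul1_cons _ (1, q)) (mul1_nil (1, (v, w))) cats0 /compat /= Vw Vq Pw /=.
by case: (v == q.1) => //; rewrite mulr1.
Qed.

Lemma mul_pth_opt_l (k : fieldType) C v q : Cgood C -> valid q ->
  mulQ (pth k q) (optQ k v (C v)) = if pend q == v then optQ k q.1 (omap (cat q.2) (C v)) else [::].
Proof.
move=> HG Vq; rewrite /optQ; case E: (C v) => [w|] /=; last by case: (pend q == v).
have /andP [Vw /eqP Pw] := HG v w E.
rewrite /pth mulQ1E (mul1_cons _ (1, (v, w))) (mul1_nil (1, q)) cats0 /compat /= Vw Vq /=.
by case: (pend q == v) => //; rewrite mulr1.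
Qed.

Lemma coef_mulzQ_r (k : fieldType) C q p : Cgood C -> valid q ->
  coef (mulQ (zQ k C) (pth k q)) p = coef (optQ k q.1 (omap (cat^~ q.2) (C q.1))) p.
Proof.
move=> HG Vq; rewrite /zQ !mulQ_cat_l !(mul_opt_pth_r _ _ HG Vq).
case: q Vq => [s w] Vq /=.
case: s Vq => [[|[|[|//]]] Hv]; have -> : Hv = isT by exact: bool_irrelevance.
all: by move=> _; rewrite ?eqxx ?neE /= ?cats0.
Qed.

Lemma coef_mulzQ_l (k : fieldType) C q p : Cgood C -> valid q ->
  coef (mulQ (pth k q) (zQ k C)) p = coef (optQ k q.1 (omap (cat q.2) (C (pend q)))) p.
Proof.
move=> HG Vq; rewrite /zQ /pth mulQ1E !mul1_cat -!mulQ1E -/(pth k q) !(mul_pth_opt_l _ _ HG Vq).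
move: (pend q) => e.
case: e => [[|[|[|//]]] Hv]; have -> : Hv = isT by exact: bool_irrelevance.
all: by rewrite ?eqxx ?neE /= ?cats0.
Qed.

Lemma mulQ_invalid_r (k : fieldType) (x : kQ k) q : ~~ valid q -> mulQ x (pth k q) = [::].
Proof.
move=> Vq; elim: x => [|t x IH] //; rewrite mulQ_consE IH /pth (mul1_cons _ (1, q)).
by rewrite (mul1_nil t) /compat (negbTE Vq) andbF.
Qed.

Lemma mulQ_invalid_l (k : fieldType) (x : kQ k) q : ~~ valid q -> mulQ (pth k q) x = [::].
Proof.
move=> Vq; rewrite /pth mulQ1E; elim: x => [|u x IH] //.
by rewrite (mul1_cons _ u) IH /compat /= (negbTE Vq).
Qed.

Lemma central_of (k : fieldType) n C : Cgood C -> Ccomm (cpar n).-1 C -> centralI n (zQ k C).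
Proof.
move=> HG HC; apply: central_paths => q.
case Vq: (valid q); last first.
  apply: inI_0 => p; rewrite coef_sub mulQ_invalid_r ?mulQ_invalid_l ?Vq //.
  by rewrite coef_nil subr0.
have HI := conv_inI k (comm_path HC Vq) q.1.
apply: (inI_eqcoef HI) => p.
by rewrite !coef_sub coef_mulzQ_r // coef_mulzQ_l.
Qed.

Lemma coef_idem_l (k : fieldType) i (x : kQ k) p :
  coef (mulQ (idem k i) x) p = if p.1 == i then coef x p else 0.
Proof.
rewrite /idem /pth mulQ1E; elim: x => [|[c [s w]] x IH].
  by rewrite /= !coef_nil; case: ifP.
rewrite (mul1_cons _ (c, (s, w))) coef_cat IH coef_cons /compat /valid /pend /=.
case: (eqVneq i s) => [<-|Hne]; last first.
  rewrite andbF coef_nil add0r.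
  case: (eqVneq (s, w) p) => [<-|Hp] /=; last by rewrite andbF add0r.
  by rewrite eq_sym (negbTE Hne).
rewrite andbT; case Vw: (composable i w); rewrite ?coef_cons ?coef_nil /= ?Vw ?mul1r;
  case: (eqVneq (i, w) p) => [<-|Hp]; rewrite /valid /= ?Vw ?eqxx ?andbT ?andbF ?addr0 ?add0r //.
Qed.

Lemma coef_idem_r (k : fieldType) i (x : kQ k) p :
  coef (mulQ x (idem k i)) p = if pend p == i then coef x p else 0.
Proof.
elim: x => [|[c [s w]] x IH].
  by rewrite /= !coef_nil; case: ifP.
rewrite mulQ_consE /idem /pth (mul1_cons _ (1, (i, [::]))) (mul1_nil (c, (s, w))) cats0.
rewrite -/(pth k (i, [::])) -/(idem k i) coef_cat IH coef_cons /compat /= andbT cats0.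
case Vw: (valid (s, w)) => /=; last first.
  by rewrite coef_nil add0r; case: ifP => _; rewrite ?add0r.
case: (eqVneq (pend (s, w)) i) => [Hi|Hne].
- rewrite coef_cons coef_nil Vw mulr1 /= addr0.
  case: (eqVneq (s, w) p) => [<-|Hp] /=; first by rewrite Hi eqxx.
  by case: ifP; rewrite ?add0r.
- rewrite coef_nil add0r.
  case: (eqVneq (s, w) p) => [<-|Hp] /=; last by case: ifP; rewrite ?add0r.
  by rewrite (negbTE Hne).
Qed.

Lemma coef_mask (k : fieldType) i (x : kQ k) p :
  coef (mul3 (idem k i) x (idem k i)) p = if (p.1 == i) && (pend p == i) then coef x p else 0.
Proof.
rewrite /mul3 coef_idem_r coef_idem_l.
by case: (p.1 == i); case: (pend p == i).
Qed.


Lemma form_central m f : fs f = fe f ->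
  exists C, [/\ C (fs f) = Some (word f), Cgood C & Ccomm m.+1 C].
Proof.
case: f => [||||||||||||j|j|||||j|j] //= _.
- by exists Cunit; split; [|exact: good_unit|exact: comm_unit].
- by exists Cb; split; [|exact: good_b|exact: comm_b].
- by exists Ck; split; [|exact: good_k|exact: comm_k].
- by exists Cs; split; [|exact: good_s|exact: comm_s].
- by exists Cunit; split; [|exact: good_unit|exact: comm_unit].
- by exists Cb; split; [|exact: good_b|exact: comm_b].
- by exists (Cd j); split; [|exact: good_d|exact: comm_d].
- by exists Cunit; split; [|exact: good_unit|exact: comm_unit].
- by exists Ck; split; [|exact: good_k|exact: comm_k].
- by exists (Cd j); split; [|exact: good_d|exact: comm_d].
Qed.

Lemma mask_zQ (k : fieldType) i C p : Cgood C ->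
  coef (mul3 (idem k i) (zQ k C) (idem k i)) p = coef (optQ k i (C i)) p.
Proof.
move=> HG; rewrite coef_mask coef_zQ; case: p => s w /=.
case: (eqVneq s i) => [->|Hne] /=; last by rewrite (@coef_optQ_ne k i) // eq_sym.
case E: (C i) => [w'|] /=; last by rewrite coef_nil; case: ifP.
rewrite coef_pth; have /andP [V' /eqP P'] := HG i w' E.
case: (eqVneq (i, w') (i, w)) => [[<-]|Hp] /=; first by rewrite P' eqxx V'.
by case: ifP; rewrite andbF.
Qed.

Lemma mask_pth (k : fieldType) i w p : valid (i, w) -> pend (i, w) = i ->
  coef (mul3 (idem k i) (pth k (i, w)) (idem k i)) p = coef (pth k (i, w)) p.
Proof.
move=> V P; rewrite coef_mask coef_pth.
case: (eqVneq (i, w) p) => [<-|Hp] /=; first by rewrite eqxx P eqxx V.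
by rewrite andbF; case: ifP.
Qed.

Lemma cpar_pos n : (3 <= n)%N -> exists m, (cpar n).-1 = m.+1.
Proof.
move=> hn; have H1 : (1 <= n - 2)%N by rewrite subn_gt0.
have H2 : (2 <= cpar n)%N by rewrite /cpar -{1}(expn1 2) leq_exp2l.
by exists (cpar n).-2; case: (cpar n) H2 => [|[|c]].
Qed.

Lemma single (k : fieldType) n i q : (3 <= n)%N -> exists z : kQ k, centralI n z /\
  inI n (subQ (mul3 (idem k i) (pth k q) (idem k i)) (mul3 (idem k i) z (idem k i))).
Proof.
move=> hn; have [m Em] := cpar_pos hn.
case Hq: [&& valid q, q.1 == i & pend q == i]; last first.
  exists [::]; split; first exact: central_nil.
  apply: inI_0 => p; rewrite coef_sub !coef_mask coef_pth coef_nil.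
  case: (eqVneq q p) => [<-|Hp]; last by rewrite andbF; case: ifP; rewrite subr0.
  by move: Hq; case: (valid q); case: (q.1 == i); case: (pend q == i) => //= _; rewrite subr0.
move/and3P: Hq => [Vq /eqP Hq1 /eqP Hqe].
case: q Vq Hq1 Hqe => s w Vq /= Hs He; subst s.
have [o [Hc Ho]] := NF m Vq.
rewrite -Em in Hc; have HI := conv_inI k Hc i.
case: Ho => [Eo | [f [Eo [Hfs Hfe]]]]; subst o.
  exists [::]; split; first exact: central_nil.
  apply: (inI_eqcoef HI) => p.
  by rewrite !coef_sub mask_pth // !coef_mask !coef_nil /=; case: ifP.
have Hff : fs f = fe f by rewrite Hfs Hfe.
have [C [HCi HG HCc]] := form_central m Hff.
exists (zQ k C); split.
  by apply: central_of => //; rewrite Em.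
apply: (inI_eqcoef HI) => p.
have HCi' : C i = Some (word f) by rewrite -[i]/((i, w).1) -Hfs.
by rewrite !coef_sub mask_pth // mask_zQ // HCi'.
Qed.

Theorem proposition2p4 (k : closedFieldType) (char2 : (2%N \in [pchar k]))
  (n : nat) (hn : (3 <= n)%N) (i : vertex) :
  (forall x : kQ k, exists z : kQ k,
      centralI n z /\
      inI n (subQ (mul3 (idem k i) x (idem k i)) (mul3 (idem k i) z (idem k i))))
  /\
  (forall z : kQ k, centralI n z -> exists x : kQ k,
      inI n (subQ (mul3 (idem k i) z (idem k i)) (mul3 (idem k i) x (idem k i)))).
Proof.
split; last first.
  by move=> z _; exists z; apply: inI_0 => p; rewrite coef_sub subrr.
elim=> [|[c q] x [z [Cz Iz]]].
  exists [::]; split; first exact: central_nil.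
  by apply: inI_0 => p; rewrite coef_sub !coef_mask coef_nil; case: ifP; rewrite subrr.
have [zq [Cq Iq]] := single k i q hn.
exists (scaleQ c zq ++ z); split; first exact: central_cat (central_scale c Cq) Cz.
apply: (inI_lin (a := c) (c := 1) Iq Iz) => p.
rewrite !coef_sub !coef_mask coef_cons coef_cat coef_scale coef_pth.
case: ifP => _; last by ring.
by case: (valid q && _); ring.
Qed.
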